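(* Let $N\ge2$ and $\alpha\in\mathbb{C}^N$. The set $\mathcal{M}_{N,\infty}$ is dense in $\mathbb{C}$ if and only if $\mathbb{Z}+\alpha_1\mathbb{Z}+\cdots+\alpha_N\mathbb{Z}$ is dense in $\mathbb{C}$.
   Context: For $(\tau,\xi)\in\mathbb{Z}\times\mathbb{Z}^N$ write $|(\tau,\xi)|=|\tau|+|\xi_1|+\cdots+|\xi_N|$ and, for $\lambda\in\mathbb{C}$, $\rho_\lambda(\tau,\xi)=\tau+\alpha_1\xi_1+\cdots+\alpha_N\xi_N-\lambda$. For $j\in\mathbb{N}$ let $\mathcal{M}_N(j)=\bigcup_{(\tau,\xi)\in\mathbb{Z}\times\mathbb{Z}^N,\ |(\tau,\xi)|>1}\{\lambda\in\mathbb{C}: |\rho_\lambda(\tau,\xi)|<|(\tau,\xi)|^{-j}\}$, and $\mathcal{M}_{N,\infty}=\bigcap_{j\in\mathbb{N}}\mathcal{M}_N(j)$. *)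

(* Defs.v *)
From HB Require Import structures.
From mathcomp Require Import all_boot all_order all_algebra.
From mathcomp Require Import reals.
From mathcomp.real_closed Require Import complex.
Set Implicit Arguments. Unset Strict Implicit. Unset Printing Implicit Defensive.
Import Order.TTheory GRing.Theory Num.Theory.
Local Open Scope ring_scope.

Definition hnorm (N : nat) (tau : int) (xi : 'I_N -> int) : nat :=
  (`|tau| + \sum_(i < N) `|xi i|)%N.

Definition rho (R : realType) (N : nat) (alpha : 'I_N -> R[i]) (lam : R[i])
    (tau : int) (xi : 'I_N -> int) : R[i] :=
  tau%:~R + \sum_(i < N) alpha i * (xi i)%:~R - lam.

Definition MN (R : realType) (N : nat) (alpha : 'I_N -> R[i]) (j : nat)
    (lam : R[i]) : Prop :=
  exists (tau : int) (xi : 'I_N -> int),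
    (1 < hnorm tau xi)%N /\
    `|rho alpha lam tau xi| < ((hnorm tau xi)%:R : R[i]) ^- j.

Definition MNinf (R : realType) (N : nat) (alpha : 'I_N -> R[i])
    (lam : R[i]) : Prop :=
  forall j : nat, MN alpha j lam.

Definition lattice (R : realType) (N : nat) (alpha : 'I_N -> R[i])
    (z : R[i]) : Prop :=
  exists (tau : int) (xi : 'I_N -> int),
    z = tau%:~R + \sum_(i < N) alpha i * (xi i)%:~R.

Definition denseC (R : realType) (S : R[i] -> Prop) : Prop :=
  forall (z : R[i]) (e : R), 0 < e ->
    exists w, S w /\ `|w - z| < (e%:C)%C.

(* Main.v *)
Require Import Defs.
From HB Require Import structures.
From mathcomp Require Import all_boot all_order all_algebra.
From mathcomp Require Import reals.
From mathcomp.real_closed Require Import complex.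
From mathcomp Require Import zify ring lra.
Import Order.TTheory GRing.Theory Num.Theory.
Local Open Scope ring_scope.
Local Open Scope complex_scope.

Section Aux.
Variable R : realType.

Definition nn (x : R[i]) : R := complex.Re `|x|.

Lemma nE (x : R[i]) : `|x| = (nn x)%:C.
Proof. by rewrite /nn (RRe_real (normr_real x)). Qed.

Lemma nn_tri (x y : R[i]) : nn (x + y) <= nn x + nn y.
Proof. by rewrite -(@lecR R) rmorphD /= -!nE ler_normD. Qed.

Lemma nn_ge0 (x : R[i]) : 0 <= nn x.
Proof. by rewrite -(@lecR R) -nE rmorph0 normr_ge0. Qed.

Lemma nn_3 (x : R[i]) : nn (3 * x) = 3 * nn x.
Proof.
apply: (@complexI R).
by rewrite -nE normrM nE rmorphM /= -nE normr_nat rmorph_nat.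
Qed.

Lemma nn_lt (x : R[i]) (e : R) : (`|x| < e%:C) = (nn x < e).
Proof. by rewrite nE ltcR. Qed.

Lemma nn_C (e : R) : 0 <= e -> nn e%:C = e.
Proof. by move=> e0; apply: (@complexI R); rewrite -nE ger0_norm // lecR. Qed.

Lemma nn_N (x : R[i]) : nn (- x) = nn x.
Proof. by rewrite /nn normrN. Qed.

End Aux.
Arguments nn {R}.
Arguments nE {R}.
Arguments nn_tri {R}.
Arguments nn_ge0 {R}.
Arguments nn_3 {R}.
Arguments nn_lt {R}.
Arguments nn_C {R}.
Arguments nn_N {R}.

Lemma hnorm_tri (N : nat) (t t' : int) (x x' : 'I_N -> int) :
  (3 * hnorm t' x' <= hnorm (t + 3 * t')%R (fun i => x i + 3 * x' i)%R + hnorm t x)%N.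
Proof.
rewrite /hnorm mulnDr big_distrr /= addnACA -big_split /=.
apply: leq_add; first lia.
apply: leq_sum => i _; lia.
Qed.

Lemma hnorm0 (N : nat) (t : int) (x : 'I_N -> int) :
  hnorm t x = 0%N -> t = 0 /\ forall i, x i = 0.
Proof.
rewrite /hnorm => /eqP; rewrite addn_eq0 => /andP [/eqP ht /eqP hs].
split; first by apply/eqP; rewrite -absz_eq0 ht.
move=> i; move/eqP: hs; rewrite sum_nat_eq0 => /forallP /(_ i) /= hi.
by apply/eqP; rewrite -absz_eq0.
Qed.

Theorem lemma2 (R : realType) (N : nat) (hN : (2 <= N)%N)
    (alpha : 'I_N -> R[i]) :
  denseC (MNinf alpha) <-> denseC (lattice alpha).
Proof.
split.
- move=> H z e e0.
  have e2 : 0 < e / 2 by lra.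
  have [lam [Hl Hd]] := H z (e / 2) e2.
  have b0 : 0 <= 2 / e by rewrite divr_ge0 // ltW.
  set n := Num.bound (2 / e).
  have hn := archi_boundP b0.
  have [t [x [h1 hr]]] := Hl n.
  exists (t%:~R + \sum_(i < N) alpha i * (x i)%:~R); split; first by exists t, x.
  move: hr; rewrite /rho.
  set w := _ + _.
  have -> : ((hnorm t x)%:R ^- n : R[i]) = (((hnorm t x)%:R ^- n : R))%:C.
    by rewrite fmorphV rmorphXn /= rmorph_nat.
  rewrite nn_lt => hr; rewrite nn_lt; rewrite nn_lt in Hd.
  have hb : ((hnorm t x)%:R ^- n : R) < e / 2.
    rewrite -[e / 2]invf_div ltf_pV2 ?posrE ?exprn_gt0 ?divr_gt0 ?ltr0n //; last lia.
    apply: (lt_trans hn); rewrite -natrX ltr_nat; apply: ltn_expl; lia.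
  have := nn_tri w (lam - z).
  rewrite /w addrA subrK => ht; lra.
- move=> H z e e0.
  have e4 : 0 < e / 4 by lra.
  have [w [[t [x ->]] hw]] := H z (e / 4) e4.
  rewrite nn_lt in hw.
  case: (leqP 2 (hnorm t x)) => hA.
    exists (t%:~R + \sum_(i < N) alpha i * (x i)%:~R); split; last first.
      rewrite nn_lt; lra.
    move=> j; exists t, x; split => //.
    rewrite /rho subrr normr0 invr_gt0 exprn_gt0 // ltr0n; lia.
  have e16 : 0 < e / 16 by lra.
  have [d [[t' [x' ed]] hd]] := H ((e / 16)%:C) (e / 16) e16.
  rewrite nn_lt in hd.
  have hD : (1 <= hnorm t' x')%N.
    case: (posnP (hnorm t' x')) => // /hnorm0 [ht hx].
    move: hd; rewrite ed ht big1 ?add0r ?sub0r ?nn_N ?nn_C; [lra|lra|].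
    by move=> i _; rewrite hx mulr0.
  have hT := @hnorm_tri N t t' x x'.
  set lam := (t + 3 * t')%:~R + \sum_(i < N) alpha i * ((x i + 3 * x' i)%:~R).
  have eql : lam = (t%:~R + \sum_(i < N) alpha i * (x i)%:~R) + 3 * d.
    rewrite ed /lam (eq_bigr (fun i => alpha i * (x i)%:~R + 3 * (alpha i * (x' i)%:~R))).
      by rewrite big_split /= -mulr_sumr intrD intrM; ring.
    by move=> i _; rewrite intrD intrM; ring.
  exists lam; split.
    move=> j; exists (t + 3 * t')%R, (fun i => x i + 3 * x' i)%R; split; first lia.
    rewrite /rho -/lam subrr normr0 invr_gt0 exprn_gt0 // ltr0n; lia.
  rewrite nn_lt eql.
  have f3 := nn_tri ((t%:~R + \sum_(i < N) alpha i * (x i)%:~R) - z) (3 * d).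
  rewrite addrAC in f3; rewrite nn_3 in f3.
  have f4 := nn_tri (d - (e / 16)%:C) ((e / 16)%:C).
  rewrite subrK nn_C in f4; last lra.
  have g := nn_ge0 d.
  apply: (le_lt_trans f3).
  have h3 : 3 * nn d <= 3 * (e / 8).
    move: f4 hd g; generalize (nn d) (nn (d - (e / 16)%:C)); move=> b c; lra.
  apply: (lt_le_trans (ltr_leD hw h3)); lra.
Qed.
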